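(* Let $I,J\subset\mathbb{R}$ be intervals, $f:I\times J\to I$, $f_\lambda(x)=f(x,\lambda)$, $\lambda_0\in J$, $f_0=f_{\lambda_0}$. Assume: (H1) $f$ is a $C^1$ family of $C^2$ interval maps; (H2) $f_0$ is not constant on any interval; (H3) $f_0$ has at most one of: (a) a non-hyperbolic fixed point or periodic orbit, which as $\lambda$ varies is a generic codimension-one period-doubling or saddle-node bifurcation; (b) one critical point which constitutes a tangency between stable and unstable manifolds of fixed points or periodic orbits, generic in that as $\lambda$ varies through $\lambda_0$ the critical point moves from one side of the periodic point to the other; (H4) for each $\lambda$, $x_\lambda$ is a repelling fixed point of $f_\lambda$, $x_0:=x_{\lambda_0}$, and $y$ is a homoclinic point to $x_0$ for $f_0$; (H5) the homoclinic orbit containing $y$ at $\lambda_0$ contains only one critical point of $f_0$; (H6) $w$ is a homoclinic tangency point to $x_0$ for $f_0$ contained in at least one homoclinic orbit $(z_{-k})_{k\ge0}$, with $w=z_{-L}$. If $(w,\lambda_0)$ is a chain explosion point, then for every $k\ge L$ (i.e. every preimage $z_{-k}$ of $w$ in this homoclinic orbit), $(z_{-k},\lambda_0)$ is a chain explosion point.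
   Context: An $\epsilon$-chain for $g$ from $x$ to $y$: $z_0=x,\dots,z_N=y$ with $|g(z_{n-1})-z_n|<\epsilon$; $x$ is chain recurrent if for every $\epsilon>0$ there is such a chain from $x$ to itself with $N>0$. $(x,\lambda_0)$ is a chain explosion point if $x$ is chain recurrent for $f_{\lambda_0}$ but some neighborhood of $x$ contains no chain recurrent point of $f_\lambda$ for all $\lambda$ on one side of $\lambda_0$. For a repelling fixed point $x_0$, $y$ is homoclinic to $x_0$ if $y$ lies in the unstable manifold of $x_0$ and $f_0^K(y)=x_0$ for some $K>0$. A homoclinic orbit is a sequence $(z_{-k})_{k\ge0}$ with $z_0=x_0$, $z_{-K}=y$ for some $K$, $f_0(z_{-k})=z_{-k+1}$, $z_{-k}\to x_0$; $w=z_{-L}$ is a homoclinic tangency point if the graph of $f_0$ has a horizontal tangent at $w$. *)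

(* Defs.v *)
From Stdlib Require Import Reals Lra.
Open Scope R_scope.

Definition is_interval (D : R -> Prop) : Prop :=
  (forall a b t, D a -> D b -> a <= t <= b -> D t) /\
  exists a b, a < b /\ D a /\ D b.

(** [g'] is the derivative of [g] relative to the set [D]
    (one-sided at endpoints of an interval). *)
Definition deriv_on (D : R -> Prop) (g g' : R -> R) : Prop :=
  forall t, D t -> forall eps, 0 < eps -> exists delta, 0 < delta /\
    forall s, D s -> s <> t -> Rabs (s - t) < delta ->
      Rabs ((g s - g t) / (s - t) - g' t) < eps.

Definition cont_on (D : R -> Prop) (g : R -> R) : Prop :=
  forall t, D t -> forall eps, 0 < eps -> exists delta, 0 < delta /\
    forall s, D s -> Rabs (s - t) < delta -> Rabs (g s - g t) < eps.

Definition cont2_on (I J : R -> Prop) (h : R -> R -> R) : Prop :=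
  forall t l, I t -> J l -> forall eps, 0 < eps -> exists delta, 0 < delta /\
    forall t' l', I t' -> J l' -> Rabs (t' - t) < delta -> Rabs (l' - l) < delta ->
      Rabs (h t' l' - h t l) < eps.

Definition fam (f : R -> R -> R) (l : R) : R -> R := fun t => f t l.

(** (H1): f : I x J -> I is a C^1 family of C^2 interval maps; [fx] is the
    partial derivative in x. *)
Definition C1_family_C2 (I J : R -> Prop) (f fx : R -> R -> R) : Prop :=
  (forall t l, I t -> J l -> I (f t l)) /\
  (forall l, J l -> deriv_on I (fam f l) (fam fx l)) /\
  (exists fl : R -> R -> R,
      (forall t, I t -> deriv_on J (f t) (fl t)) /\
      cont2_on I J fx /\ cont2_on I J fl) /\
  (exists fxx : R -> R -> R,
      forall l, J l -> deriv_on I (fam fx l) (fam fxx l) /\ cont_on I (fam fxx l)).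

Definition not_const_on_intervals (I : R -> Prop) (g : R -> R) : Prop :=
  forall a b, a < b -> (forall t, a <= t <= b -> I t) ->
    exists s t, a <= s <= b /\ a <= t <= b /\ g s <> g t.

(** Derivative of the n-th iterate of f_l at p (chain rule product). *)
Fixpoint dIter (f fx : R -> R -> R) (l : R) (n : nat) (p : R) : R :=
  match n with
  | O => 1
  | S n' => dIter f fx l n' p * fx (Nat.iter n' (fam f l) p) l
  end.

Definition periodic (I : R -> Prop) (g : R -> R) (n : nat) (p : R) : Prop :=
  (0 < n)%nat /\ I p /\ Nat.iter n g p = p.

Definition min_periodic (I : R -> Prop) (g : R -> R) (n : nat) (p : R) : Prop :=
  periodic I g n p /\ forall j, (0 < j < n)%nat -> Nat.iter j g p <> p.

(** Unstable manifold of a point p of period n of f_l: points having a backward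
    f_l^n-orbit in I converging to p. *)
Definition Wu (I : R -> Prop) (f : R -> R -> R) (l : R) (p : R) (n : nat) (y : R) : Prop :=
  exists z : nat -> R, z O = y /\ (forall k, I (z k)) /\
    (forall k, Nat.iter n (fam f l) (z (S k)) = z k) /\ Un_cv z p.

Definition repelling_fixed (I : R -> Prop) (f fx : R -> R -> R) (l : R) (p : R) : Prop :=
  I p /\ f p l = p /\ 1 < Rabs (fx p l).

Definition homoclinic_point (I : R -> Prop) (f : R -> R -> R) (l x0 y : R) : Prop :=
  Wu I f l x0 1 y /\ exists K, (0 < K)%nat /\ Nat.iter K (fam f l) y = x0.

(** A homoclinic orbit (z_{-k})_{k>=0} to x0, encoded as z k = z_{-k}. *)
Definition HomOrbit (I : R -> Prop) (f : R -> R -> R) (l x0 : R) (z : nat -> R) : Prop :=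
  z O = x0 /\ (forall k, I (z k)) /\ (forall k, f (z (S k)) l = z k) /\ Un_cv z x0.

Definition only_one_crit_on_orbits (I : R -> Prop) (f fx : R -> R -> R) (l x0 y : R) : Prop :=
  forall z, HomOrbit I f l x0 z -> (exists K, z K = y) ->
    exists c, (exists k, z k = c) /\ fx c l = 0 /\
      forall k, fx (z k) l = 0 -> z k = c.

Definition all_hyperbolic (I : R -> Prop) (f fx : R -> R -> R) (l0 : R) : Prop :=
  forall n q, periodic I (fam f l0) n q -> Rabs (dIter f fx l0 n q) <> 1.

Definition nonhyp_periodic (I : R -> Prop) (f fx : R -> R -> R) (l0 q : R) : Prop :=
  exists n, periodic I (fam f l0) n q /\ Rabs (dIter f fx l0 n q) = 1.

(** A critical point which constitutes a tangency between the unstable manifold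
    of a (repelling) periodic orbit and the stable manifold (the grand preimages)
    of a (repelling) periodic orbit. *)
Definition crit_tangency (I : R -> Prop) (f fx : R -> R -> R) (l0 c : R) : Prop :=
  I c /\ fx c l0 = 0 /\
  (exists n p, periodic I (fam f l0) n p /\ 1 < Rabs (dIter f fx l0 n p) /\ Wu I f l0 p n c) /\
  (exists m q K, periodic I (fam f l0) m q /\ 1 < Rabs (dIter f fx l0 m q) /\
     Nat.iter K (fam f l0) c = q).

Definition ball (a r : R) : R -> Prop := fun t => Rabs (t - a) < r.

Definition generic_SN (I J : R -> Prop) (f fx : R -> R -> R) (l0 p : R) (n : nat) : Prop :=
  dIter f fx l0 n p = 1 /\
  (forall g1 g2, deriv_on I (Nat.iter n (fam f l0)) g1 -> deriv_on I g1 g2 -> g2 p <> 0) /\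
  (forall h, deriv_on J (fun l => Nat.iter n (fam f l) p) h -> h l0 <> 0).

Definition generic_PD (I J : R -> Prop) (f fx : R -> R -> R) (l0 p : R) (n : nat) : Prop :=
  dIter f fx l0 n p = -1 /\
  exists (pc : R -> R) (eta : R), 0 < eta /\ pc l0 = p /\ cont_on (ball l0 eta) pc /\
    (forall l, Rabs (l - l0) < eta -> J l /\ I (pc l) /\ Nat.iter n (fam f l) (pc l) = pc l) /\
    (forall l m, l0 - eta < l < l0 -> l0 < m < l0 + eta ->
       (dIter f fx l n (pc l) + 1) * (dIter f fx m n (pc m) + 1) < 0).

(** Generic unfolding of the critical tangency at c: as l passes through l0, the
    (continued) critical point moves from one side of the (continued) periodic
    point to the other (measured after the K iterates that bring c onto q). *)
Definition generic_tangency (I J : R -> Prop) (f fx : R -> R -> R) (l0 c : R) : Prop :=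
  exists (q : R) (m K : nat) (qc cc : R -> R) (eta : R),
    0 < eta /\ periodic I (fam f l0) m q /\ Nat.iter K (fam f l0) c = q /\
    qc l0 = q /\ cc l0 = c /\ cont_on (ball l0 eta) qc /\ cont_on (ball l0 eta) cc /\
    (forall l, Rabs (l - l0) < eta ->
       J l /\ I (qc l) /\ I (cc l) /\ Nat.iter m (fam f l) (qc l) = qc l /\ fx (cc l) l = 0) /\
    (forall l l', l0 - eta < l < l0 -> l0 < l' < l0 + eta ->
       (Nat.iter K (fam f l) (cc l) - qc l) * (Nat.iter K (fam f l') (cc l') - qc l') < 0).

Definition H3 (I J : R -> Prop) (f fx : R -> R -> R) (l0 : R) : Prop :=
  (all_hyperbolic I f fx l0 /\ forall c, ~ crit_tangency I f fx l0 c)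
  \/
  (exists p n, min_periodic I (fam f l0) n p /\ Rabs (dIter f fx l0 n p) = 1 /\
     (forall q, nonhyp_periodic I f fx l0 q -> exists i, q = Nat.iter i (fam f l0) p) /\
     (generic_SN I J f fx l0 p n \/ generic_PD I J f fx l0 p n) /\
     forall c, ~ crit_tangency I f fx l0 c)
  \/
  (all_hyperbolic I f fx l0 /\
   exists c, crit_tangency I f fx l0 c /\
     (forall c', crit_tangency I f fx l0 c' -> c' = c) /\
     generic_tangency I J f fx l0 c).

Definition eps_chain (I : R -> Prop) (g : R -> R) (eps : R) (N : nat) (a b : R) : Prop :=
  exists z : nat -> R, z O = a /\ z N = b /\ (forall n, (n <= N)%nat -> I (z n)) /\
    forall n, (1 <= n <= N)%nat -> Rabs (g (z (n - 1)%nat) - z n) < eps.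

Definition chain_recurrent (I : R -> Prop) (g : R -> R) (a : R) : Prop :=
  forall eps, 0 < eps -> exists N, (0 < N)%nat /\ eps_chain I g eps N a a.

Definition chain_explosion (I J : R -> Prop) (f : R -> R -> R) (a l0 : R) : Prop :=
  chain_recurrent I (fam f l0) a /\
  exists delta eta s, 0 < delta /\ 0 < eta /\ (s = 1 \/ s = -1) /\
    forall l, 0 < s * (l - l0) < eta ->
      J l /\ forall b, Rabs (b - a) < delta -> ~ chain_recurrent I (fam f l) b.

(* Main.v *)
Require Import Defs.
From Stdlib Require Import Reals Lra Lia Arith.
Open Scope R_scope.

Lemma deriv_cont D g g' : deriv_on D g g' -> cont_on D g.
Proof.
  intros H t Dt eps He. destruct (H t Dt 1 Rlt_0_1) as [d [Hd Hs]].
  set (K := Rabs (g' t) + 1).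
  assert (HK : 0 < K) by (unfold K; pose proof (Rabs_pos (g' t)); lra).
  exists (Rmin d (eps / K)). split.
  { apply Rmin_pos; [lra| apply Rdiv_lt_0_compat; lra]. }
  intros s Ds Hst. destruct (Req_dec s t) as [->|Hne].
  { rewrite Rminus_diag, Rabs_R0; lra. }
  assert (H1 : Rabs ((g s - g t)/(s-t) - g' t) < 1).
  { apply Hs; auto. eapply Rlt_le_trans; [exact Hst| apply Rmin_l]. }
  assert (Hq: Rabs ((g s - g t)/(s-t)) < K).
  { pose proof (Rabs_triang ((g s - g t)/(s-t) - g' t) (g' t)) as T.
    replace ((g s - g t)/(s-t) - g' t + g' t) with ((g s - g t)/(s-t)) in T by ring.
    unfold K; lra. }
  assert (E: g s - g t = (g s - g t)/(s-t) * (s-t)) by (field; intro; apply Hne; lra).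
  rewrite E, Rabs_mult.
  assert (H2 : Rabs (s-t) < eps/K) by (eapply Rlt_le_trans; [exact Hst| apply Rmin_r]).
  apply Rle_lt_trans with (K * Rabs (s - t)).
  { apply Rmult_le_compat_r; [apply Rabs_pos| lra]. }
  replace eps with (K * (eps / K)) by (field; lra).
  apply Rmult_lt_compat_l; lra.
Qed.

Lemma cr_image I g b : (forall t, I t -> I (g t)) -> cont_on I g ->
  chain_recurrent I g b -> chain_recurrent I g (g b).
Proof.
  intros HI Hc Hcr eps He.
  assert (Ib : I b).
  { destruct (Hcr 1 Rlt_0_1) as [N [_ [u [u0 [_ [uI _]]]]]].
    rewrite <- u0; apply uI; lia. }
  destruct (Hc (g b) (HI b Ib) (eps/2)) as [dc [Hdc Hcs]]; [lra|].
  destruct (Hcr (Rmin (eps/2) dc)) as [N [HN [u [u0 [uN [uI uS]]]]]].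
  { apply Rmin_pos; lra. }
  assert (uS' : forall n, (1 <= n <= N)%nat -> Rabs (g (u (n-1)%nat) - u n) < eps/2 /\
                   Rabs (g (u (n-1)%nat) - u n) < dc).
  { intros n Hn. pose proof (uS n Hn). split; eapply Rlt_le_trans; eauto;
    [apply Rmin_l | apply Rmin_r]. }
  exists N. split; auto.
  exists (fun n => if Nat.eq_dec n 0 then g b else if le_lt_dec N n then g b else u (S n)).
  split; [reflexivity|]. split.
  { destruct (Nat.eq_dec N 0); [lia|]. destruct (le_lt_dec N N); [reflexivity| lia]. }
  split.
  { intros n Hn. destruct (Nat.eq_dec n 0); [auto|]. destruct (le_lt_dec N n); [auto|].
    apply uI; lia. }
  intros n Hn.
  destruct (Nat.eq_dec n 0) as [|n0]; [lia|].
  destruct (Nat.eq_dec (n-1) 0) as [e1|e1].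
  -
    assert (n = 1%nat) by lia. subst n.
    destruct (uS' 1%nat ltac:(lia)) as [_ A]. simpl in A. rewrite u0 in A.
    assert (B : Rabs (g (u 1%nat) - g (g b)) < eps/2).
    { apply Hcs. apply uI; lia. rewrite Rabs_minus_sym; exact A. }
    destruct (le_lt_dec N 1) as [l1|l1].
    + assert (N = 1%nat) by lia. subst N. rewrite uN in B.
      rewrite Rabs_minus_sym; lra.
    + destruct (uS' 2%nat ltac:(lia)) as [C _]. simpl in C.
      pose proof (Rabs_triang (g (g b) - g (u 1%nat)) (g (u 1%nat) - u 2%nat)) as T.
      replace (g (g b) - g (u 1%nat) + (g (u 1%nat) - u 2%nat)) with (g (g b) - u 2%nat) in T by ring.
      rewrite Rabs_minus_sym in B. lra.
  - destruct (le_lt_dec N (n-1)) as [|l2]; [lia|].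
    destruct (le_lt_dec N n) as [l3|l3].
    + assert (n = N) by lia. subst n.
      replace (S (N-1)) with N by lia. rewrite uN, Rminus_diag, Rabs_R0; lra.
    + destruct (uS' (S n) ltac:(lia)) as [C _].
      replace (S n - 1)%nat with n in C by lia.
      replace (S (n-1)) with n by lia. lra.
Qed.

Lemma cr_iter I g b n : (forall t, I t -> I (g t)) -> cont_on I g ->
  chain_recurrent I g b -> chain_recurrent I g (Nat.iter n g b).
Proof.
  intros HI Hc Hcr. induction n; simpl; auto. apply cr_image; auto.
Qed.

Lemma mvt_ord I g g' a b M : is_interval I -> deriv_on I g g' -> I a -> I b -> a < b ->
  (forall u, a <= u <= b -> Rabs (g' u) <= M) -> Rabs (g b - g a) <= M * (b - a).
Proof.
  intros [Hconv _] Hd Ia Ib Hab HM.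
  assert (HM0 : 0 <= M) by (eapply Rle_trans; [apply Rabs_pos| apply (HM a); lra]).
  assert (Hint : forall u, a < u < b -> derivable_pt_lim g u (g' u)).
  { intros u Hu eps He. destruct (Hd u (Hconv a b u Ia Ib ltac:(lra)) eps He) as [d [Hd0 Hs]].
    assert (Hp : 0 < Rmin d (Rmin (u - a) (b - u))) by (repeat apply Rmin_pos; lra).
    exists (mkposreal _ Hp). intros h Hh Hlt. simpl in Hlt.
    pose proof (Rmin_l d (Rmin (u - a) (b - u))). pose proof (Rmin_r d (Rmin (u - a) (b - u))).
    pose proof (Rmin_l (u - a) (b - u)). pose proof (Rmin_r (u - a) (b - u)).
    assert (- Rabs h <= h <= Rabs h) by (split; [apply Ropp_le_cancel; rewrite Ropp_involutive; rewrite <- Rabs_Ropp; apply RRle_abs | apply RRle_abs]).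
    specialize (Hs (u + h)). replace (u + h - u) with h in Hs by ring.
    apply Hs.
    - apply (Hconv a b); auto; lra.
    - intro; apply Hh; lra.
    - lra. }
  destruct (Rle_lt_dec (Rabs (g b - g a)) (M * (b - a))) as [|Hc]; auto.
  exfalso. set (e := Rabs (g b - g a) - M * (b - a)).
  assert (He : 0 < e) by (unfold e; lra).
  destruct (deriv_cont _ _ _ Hd a Ia (e/2) ltac:(lra)) as [da [Hda Ha]].
  destruct (deriv_cont _ _ _ Hd b Ib (e/2) ltac:(lra)) as [db [Hdb Hb]].
  set (h := Rmin da (Rmin db ((b - a)/2)) / 2).
  assert (Hh0 : 0 < h) by (unfold h; assert (0 < Rmin da (Rmin db ((b - a)/2))) by (repeat apply Rmin_pos; lra); lra).
  pose proof (Rmin_l da (Rmin db ((b - a)/2))). pose proof (Rmin_r da (Rmin db ((b - a)/2))).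
  pose proof (Rmin_l db ((b - a)/2)). pose proof (Rmin_r db ((b - a)/2)).
  assert (h < da /\ h < db /\ h < (b - a)/2) as [h1 [h2 h3]] by (unfold h; lra).
  destruct (MVT_cor2 g g' (a + h) (b - h) ltac:(lra)) as [c [Ec Hc']].
  { intros c Hc'. apply Hint; lra. }
  assert (A1 : Rabs (g (a + h) - g a) < e/2).
  { apply Ha. apply (Hconv a b); auto; lra. replace (a + h - a) with h by ring. rewrite Rabs_right; lra. }
  assert (A2 : Rabs (g (b - h) - g b) < e/2).
  { apply Hb. apply (Hconv a b); auto; lra. replace (b - h - b) with (- h) by ring. rewrite Rabs_Ropp, Rabs_right; lra. }
  assert (A3 : Rabs (g (b - h) - g (a + h)) <= M * (b - a)).
  { rewrite Ec, Rabs_mult. rewrite (Rabs_right (b - h - (a + h))) by lra.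
    apply Rle_trans with (M * (b - h - (a + h))).
    - apply Rmult_le_compat_r; [lra| apply HM; lra].
    - apply Rmult_le_compat_l; lra. }
  pose proof (Rabs_triang (g b - g (b - h)) (g (b - h) - g a)) as T1.
  pose proof (Rabs_triang (g (b - h) - g (a + h)) (g (a + h) - g a)) as T2.
  replace (g b - g (b - h) + (g (b - h) - g a)) with (g b - g a) in T1 by ring.
  replace (g (b - h) - g (a + h) + (g (a + h) - g a)) with (g (b - h) - g a) in T2 by ring.
  rewrite Rabs_minus_sym in A2. unfold e in *. lra.
Qed.

Lemma mvt_sym I g g' a b M : is_interval I -> deriv_on I g g' -> I a -> I b ->
  (forall u, Rmin a b <= u <= Rmax a b -> Rabs (g' u) <= M) ->
  Rabs (g b - g a) <= M * Rabs (b - a).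
Proof.
  intros HI Hd Ia Ib HM.
  destruct (Rtotal_order a b) as [Hab|[Hab|Hab]].
  - rewrite (Rabs_right (b - a)) by lra. apply (mvt_ord I g g'); auto.
    intros u Hu; apply HM; rewrite Rmin_left, Rmax_right; lra.
  - subst. rewrite !Rminus_diag, Rabs_R0, Rmult_0_r; lra.
  - rewrite Rabs_minus_sym, (Rabs_minus_sym b a), (Rabs_right (a - b)) by lra.
    apply (mvt_ord I g g'); auto.
    intros u Hu; apply HM; rewrite Rmin_right, Rmax_left; lra.
Qed.

Lemma f_cont2 I J f fx : is_interval I -> C1_family_C2 I J f fx ->
  forall t0 l0, I t0 -> J l0 -> forall eps, 0 < eps -> exists d, 0 < d /\
  forall t l, I t -> J l -> Rabs (t - t0) < d -> Rabs (l - l0) < d ->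
  Rabs (f t l - f t0 l0) < eps.
Proof.
  intros HI [Hmap [Hdx [[fl [Hdl [Hcx Hcl]]] _]]] t0 l0 It0 Jl0 eps He.
  destruct (Hcx t0 l0 It0 Jl0 1 Rlt_0_1) as [d1 [Hd1 H1]].
  set (M := Rabs (fx t0 l0) + 1).
  assert (HM : 0 < M) by (unfold M; pose proof (Rabs_pos (fx t0 l0)); lra).
  destruct (deriv_cont _ _ _ (Hdl t0 It0) l0 Jl0 (eps/2) ltac:(lra)) as [d2 [Hd2 H2]].
  assert (Hp : 0 < eps / (2 * M)) by (apply Rdiv_lt_0_compat; lra).
  exists (Rmin d1 (Rmin d2 (eps / (2 * M)))). split; [repeat apply Rmin_pos; lra|].
  pose proof (Rmin_l d1 (Rmin d2 (eps / (2 * M)))). pose proof (Rmin_r d1 (Rmin d2 (eps / (2 * M)))).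
  pose proof (Rmin_l d2 (eps / (2 * M))). pose proof (Rmin_r d2 (eps / (2 * M))).
  intros t l It Jl Ht Hl.
  assert (A : Rabs (f t l - f t0 l) <= M * Rabs (t - t0)).
  { apply (mvt_sym I (fam f l) (fam fx l) t0 t M HI (Hdx l Jl) It0 It).
    intros u Hu. unfold fam.
    assert (Iu : I u).
    { destruct HI as [Hconv _]. apply (Hconv (Rmin t0 t) (Rmax t0 t)); auto.
      - unfold Rmin; destruct (Rle_dec t0 t); auto.
      - unfold Rmax; destruct (Rle_dec t0 t); auto. }
    assert (Rabs (u - t0) < d1).
    { unfold Rmin, Rmax in Hu. destruct (Rle_dec t0 t).
      - rewrite Rabs_right by lra. rewrite Rabs_right in Ht by lra. lra.
      - rewrite Rabs_left1 by lra. rewrite Rabs_left1 in Ht by lra. lra. }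
    specialize (H1 u l Iu Jl ltac:(lra) ltac:(lra)).
    pose proof (Rabs_triang (fx u l - fx t0 l0) (fx t0 l0)) as T.
    replace (fx u l - fx t0 l0 + fx t0 l0) with (fx u l) in T by ring.
    unfold M; lra. }
  assert (B : Rabs (f t0 l - f t0 l0) < eps/2) by (apply H2; auto; lra).
  assert (C : M * Rabs (t - t0) < eps / 2).
  { replace (eps/2) with (M * (eps / (2 * M))) by (field; lra).
    apply Rmult_lt_compat_l; lra. }
  pose proof (Rabs_triang (f t l - f t0 l) (f t0 l - f t0 l0)) as T.
  replace (f t l - f t0 l + (f t0 l - f t0 l0)) with (f t l - f t0 l0) in T by ring.
  lra.
Qed.

Lemma iter_I I J f fx : C1_family_C2 I J f fx -> forall n l t, J l -> I t ->
  I (Nat.iter n (fam f l) t).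
Proof.
  intros [Hmap _] n l t Jl It. induction n; simpl; auto. unfold fam at 1. apply Hmap; auto.
Qed.

Lemma iter_cont2 I J f fx : is_interval I -> C1_family_C2 I J f fx ->
  forall n t0 l0, I t0 -> J l0 -> forall eps, 0 < eps -> exists d, 0 < d /\
  forall t l, I t -> J l -> Rabs (t - t0) < d -> Rabs (l - l0) < d ->
  Rabs (Nat.iter n (fam f l) t - Nat.iter n (fam f l0) t0) < eps.
Proof.
  intros HI HC n. induction n; intros t0 l0 It0 Jl0 eps He.
  - exists eps. split; auto.
  - set (p0 := Nat.iter n (fam f l0) t0).
    assert (Ip0 : I p0) by (apply (iter_I I J f fx); auto).
    destruct (f_cont2 I J f fx HI HC p0 l0 Ip0 Jl0 eps He) as [d1 [Hd1 H1]].
    destruct (IHn t0 l0 It0 Jl0 d1 Hd1) as [d2 [Hd2 H2]].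
    exists (Rmin d1 d2). split; [apply Rmin_pos; lra|].
    pose proof (Rmin_l d1 d2). pose proof (Rmin_r d1 d2).
    intros t l It Jl Ht Hl. simpl. unfold fam at 1 3. fold p0.
    apply H1; auto. apply (iter_I I J f fx); auto. apply H2; auto; lra. lra.
Qed.

Lemma orbit_iter f l0 (z : nat -> R) : (forall k, f (z (S k)) l0 = z k) ->
  forall j m, Nat.iter j (fam f l0) (z (j + m)%nat) = z m.
Proof.
  intros Hz j. induction j; intros m; simpl; auto.
  replace (S (j + m)) with (j + S m)%nat by lia. rewrite IHj. unfold fam. apply Hz.
Qed.

Lemma orbit_cr I f l0 x0 (z : nat -> R) : HomOrbit I f l0 x0 z -> f x0 l0 = x0 ->
  forall k, chain_recurrent I (fam f l0) (z k).
Proof.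
  intros [z0 [zI [zS zc]]] Hfix k eps He.
  destruct (zc eps He) as [Nc HNc].
  set (m := (Nc + S k)%nat).
  exists (S m). split; [lia|].
  exists (fun i => if le_lt_dec i k then z (k - i)%nat else z (m + k + 1 - i)%nat).
  split. { destruct (le_lt_dec 0 k); [f_equal; lia| lia]. }
  split. { destruct (le_lt_dec (S m) k); [unfold m in *; lia| f_equal; unfold m; lia]. }
  split. { intros n _. destruct (le_lt_dec n k); auto. }
  intros n Hn. unfold fam.
  destruct (le_lt_dec (n - 1) k) as [a|a]; destruct (le_lt_dec n k) as [b|b].
  - replace (k - (n - 1))%nat with (S (k - n)) by lia. rewrite zS, Rminus_diag, Rabs_R0; lra.
  - assert (n = S k) by lia. subst n. replace (k - (S k - 1))%nat with 0%nat by lia.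
    rewrite z0, Hfix. replace (m + k + 1 - S k)%nat with m by lia.
    specialize (HNc m ltac:(unfold m; lia)). unfold Rdist in HNc.
    rewrite Rabs_minus_sym; exact HNc.
  - lia.
  - replace (m + k + 1 - (n - 1))%nat with (S (m + k + 1 - n)) by (unfold m in *; lia).
    rewrite zS, Rminus_diag, Rabs_R0; lra.
Qed.

Theorem mainTheorem9
  (I J : R -> Prop) (f fx : R -> R -> R) (l0 : R)
  (x : R -> R) (y w : R) (z : nat -> R) (L : nat) :
  is_interval I -> is_interval J -> J l0 ->
  (* (H1) *) C1_family_C2 I J f fx ->
  (* (H2) *) not_const_on_intervals I (fam f l0) ->
  (* (H3) *) H3 I J f fx l0 ->
  (* (H4) *) (forall l, J l -> repelling_fixed I f fx l (x l)) -> cont_on J x ->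
             homoclinic_point I f l0 (x l0) y ->
  (* (H5) *) only_one_crit_on_orbits I f fx l0 (x l0) y ->
  (* (H6) *) HomOrbit I f l0 (x l0) z -> z L = w -> fx w l0 = 0 ->
  chain_explosion I J f w l0 ->
  forall k, (L <= k)%nat -> chain_explosion I J f (z k) l0.
Proof.
  intros HI HJ Jl0 HC _ _ H4 _ _ _ Hz HzL _ [_ [delta [eta [s [Hd [He [Hs Hall]]]]]]] k Hk.
  assert (Hfix : f (x l0) l0 = x l0) by (destruct (H4 l0 Jl0) as [_ [E _]]; exact E).
  pose proof Hz as [_ [zI [zS _]]].
  split; [apply (orbit_cr I f l0 (x l0)); auto|].
  set (n := (k - L)%nat).
  assert (Ew : Nat.iter n (fam f l0) (z k) = w).
  { rewrite <- HzL. replace k with (n + L)%nat at 1 by (unfold n; lia). apply orbit_iter; auto. }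
  destruct (iter_cont2 I J f fx HI HC n (z k) l0 (zI k) Jl0 delta Hd) as [d [Hd0 Hcd]].
  exists d, (Rmin eta d), s. split; auto. split; [apply Rmin_pos; lra|]. split; auto.
  intros l Hl. pose proof (Rmin_l eta d). pose proof (Rmin_r eta d).
  destruct (Hall l ltac:(lra)) as [Jl Hno]. split; auto.
  intros b Hb Hcr.
  assert (Ib : I b).
  { destruct (Hcr 1 Rlt_0_1) as [N [_ [u [u0 [_ [uI _]]]]]]. rewrite <- u0; apply uI; lia. }
  assert (Hll : Rabs (l - l0) < d).
  { destruct Hs as [-> | ->].
    - rewrite Rabs_right; lra.
    - rewrite Rabs_left; lra. }
  apply (Hno (Nat.iter n (fam f l) b)).
  - rewrite <- Ew. apply Hcd; auto.
  - apply cr_iter; auto.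
    + intros t It. unfold fam. destruct HC as [Hmap _]. apply Hmap; auto.
    + destruct HC as [_ [Hdx _]]. apply (deriv_cont _ _ _ (Hdx l Jl)).
Qed.
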